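(* If a metric space $(X,d_X)$ contains a sequence of $n$-dimensional dilated cubes $f_m\colon\{0,1,\dots,k_m\}^n\to X$ with $\lim_{m\to\infty}k_m=\infty$, then $\operatorname{asdim}_{AN}(X,d_X)\ge n$.
   Context: An $n$-dimensional dilated cube in $(X,d_X)$ is a map $f\colon\{0,\dots,k\}^n\to X$ such that for some constant $C\ge1$, $d_X(f(x),f(y))=C\|x-y\|_1$ for all $x,y$ ($\ell_1$-norm). For $s>0$, an $s$-scale chain is a finite sequence $x_0,\dots,x_m$ with $d(x_i,x_{i+1})<s$; the $s$-scale connected components of a subset $U$ are the classes of the relation ''joined by an $s$-scale chain inside $U$''. A nondecreasing $D\colon\mathbb{R}_+\to\mathbb{R}_+$ is an $n$-dimensional control function of $X$ if for every $s>0$ there is a cover $\{\mathcal U_0,\dots,\mathcal U_n\}$ of $X$ whose members have $s$-scale connected components of diameter at most $D(s)$. $\operatorname{asdim}_{AN}(X)$ is the least $n$ such that $X$ has an $n$-dimensional control function of the form $D(s)=Cs+k$ ($C>0$, $k\in\mathbb{R}$), or $\infty$ if none exists. *)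

(* Defs.v *)
From Stdlib Require Import Reals List.
Open Scope R_scope.

Record is_metric {X : Type} (d : X -> X -> R) : Prop := {
  metric_nonneg : forall x y, 0 <= d x y;
  metric_zero_iff : forall x y, d x y = 0 <-> x = y;
  metric_sym : forall x y, d x y = d y x;
  metric_triangle : forall x y z, d x z <= d x y + d y z
}.

(* Points of {0,...,k}^n are represented as functions nat -> nat whose first
   n coordinates are <= k (other coordinates are irrelevant). *)
Definition in_cube (n k : nat) (x : nat -> nat) : Prop :=
  forall i, (i < n)%nat -> (x i <= k)%nat.

Fixpoint l1_dist (n : nat) (x y : nat -> nat) : R :=
  match n with
  | O => 0
  | S n' => l1_dist n' x y + Rabs (INR (x n') - INR (y n'))
  end.

Definition dilated_cube {X : Type} (d : X -> X -> R) (n k : nat)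
    (f : (nat -> nat) -> X) : Prop :=
  exists C : R, 1 <= C /\
    forall x y, in_cube n k x -> in_cube n k y ->
      d (f x) (f y) = C * l1_dist n x y.

Definition s_chain_in {X : Type} (d : X -> X -> R) (s : R) (U : X -> Prop)
    (x y : X) : Prop :=
  exists (l : list X),
    let p := x :: l in
    (forall z, List.In z p -> U z) /\
    List.last p x = y /\
    (forall i, (S i < length p)%nat ->
       d (List.nth i p x) (List.nth (S i) p x) < s).

Definition s_components_bounded {X : Type} (d : X -> X -> R) (s : R)
    (U : X -> Prop) (D : R) : Prop :=
  forall x y, U x -> U y -> s_chain_in d s U x y -> d x y <= D.

Definition control_function {X : Type} (d : X -> X -> R) (n : nat)
    (D : R -> R) : Prop :=
  (forall s t, 0 < s -> s <= t -> D s <= D t) /\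
  forall s, 0 < s ->
    exists U : nat -> X -> Prop,
      (forall x, exists i, (i <= n)%nat /\ U i x) /\
      (forall i, (i <= n)%nat -> s_components_bounded d s (U i) (D s)).

Definition asdimAN_le {X : Type} (d : X -> X -> R) (n : nat) : Prop :=
  exists C k : R, 0 < C /\ control_function d n (fun s => C * s + k).

Definition asdimAN_ge {X : Type} (d : X -> X -> R) (n : nat) : Prop :=
  forall m, (m < n)%nat -> ~ asdimAN_le d m.

(* Main.v *)
Require Import Defs.
From Stdlib Require Import Reals.
From Stdlib Require Import Lra Lia Psatz List ClassicalEpsilon Classical_Prop.

Module MC.
From mathcomp Require Import all_boot all_fingroup.
Set Implicit Arguments. Unset Strict Implicit. Unset Printing Implicit Defensive.
Local Open Scope nat_scope.

Lemma val_ordS n (i : 'I_n) : (ordS i : nat) = if i.+1 == n then 0 else i.+1.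
Proof.
case: i => m lt /=. case: eqP => [->|h]; first by rewrite modnn.
by rewrite modn_small // ltn_neqAle lt andbT; apply/eqP.
Qed.

Lemma val_ord_pred n (i : 'I_n) : (ord_pred i : nat) = if i == 0 :> nat then n.-1 else i.-1.
Proof.
case: i => [[|m] lt] /=.
  by rewrite add0n modn_small // prednK.
by rewrite modnDr modn_small // ltnW.
Qed.

Lemma parity_inv (T : finType) (A : {set T}) (f : T -> T) :
  (forall a, a \in A -> f a \in A) -> (forall a, a \in A -> f (f a) = a) ->
  odd #|A| = odd #|[set a in A | f a == a]|.
Proof.
move: {2}#|A| (leqnn #|A|) => m; elim: m A => [|m IH] A.
  rewrite leqn0 => /eqP/cards0_eq -> _ _.
  by rewrite cards0 (_ : [set a in set0 | _] = set0) ?cards0 //; apply/setP=> x; rewrite !inE.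
move=> hA fA ffA.
case: (boolP [exists a in A, f a != a]) => [/existsP [a /andP [aA fa]] | ].
  pose B := A :\ a :\ f a.
  have faA := fA a aA.
  have cA : #|A| = #|B|.+2.
    rewrite /B. rewrite (cardsD1 a A) aA (cardsD1 (f a) (A :\ a)) !inE faA fa /=.
    by rewrite add1n.
  have fB : forall b, b \in B -> f b \in B.
    move=> b; rewrite !inE => /and3P [bfa ba bA].
    rewrite fA // andbT. apply/andP; split.
      by apply: contra ba => /eqP h; rewrite -(ffA b bA) h (ffA a aA).
    by apply: contra bfa => /eqP h; rewrite -(ffA b bA) h.
  have ffB : forall b, b \in B -> f (f b) = b.
    by move=> b; rewrite !inE => /and3P [_ _ bA]; apply: ffA.
  have hB : #|B| <= m by rewrite -ltnS -ltnS -cA (leqW hA).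
  rewrite cA /= negbK (IH B hB fB ffB). congr (odd _); apply: eq_card => x; rewrite !inE.
  case: (eqVneq (f x) x) => fx; rewrite ?andbF ?andbT //.
  case: (eqVneq x (f a)) => [xfa|] /=.
    by have := fx; rewrite xfa (ffA a aA) => h; rewrite -h eqxx in fa.
  case: (eqVneq x a) => [xa |] //=.
  by rewrite xa in fx; rewrite fx eqxx in fa.
rewrite negb_exists => /forallP h.
congr (odd _); apply: eq_card => x; rewrite !inE.
case xA: (x \in A) => //=; have := h x; by rewrite xA /= negbK => ->.
Qed.

Lemma surj_inj_in (T U : finType) (A : {set T}) (f : T -> U) (B : {set U}) :
  #|A| <= #|B| -> B \subset f @: A -> {in A &, injective f}.
Proof.
move=> cAB sB; apply/imset_injP; rewrite eqn_leq leq_imset_card /=.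
exact: leq_trans cAB (subset_leq_card sB).
Qed.

Local Open Scope group_scope.
Section Kuhn.
Variable K : nat.
Definition simp N := ({ffun 'I_N -> 'I_K.+1} * {perm 'I_N})%type.
Definition vtx N (s : simp N) (t : nat) : {ffun 'I_N -> nat} :=
  [ffun i => (s.1 i : nat) + (nat_of_ord (s.2 i) < t)].
Definition cube N (p : {ffun 'I_N -> nat}) := forall i, p i <= K.+1.
Definition fl N (lab : {ffun 'I_N -> nat} -> nat) (s : simp N) :=
  [forall i : 'I_N.+1, [exists t : 'I_N.+1, lab (vtx s t) == i]].
Definition good N (lab : {ffun 'I_N -> nat} -> nat) :=
  [/\ (forall p, cube p -> lab p <= N),
      (forall p (i : 'I_N), cube p -> p i = 0 -> lab p <> i.+1) &
      (forall p (i : 'I_N), cube p -> p i = K.+1 -> lab p <> 0)].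

Lemma vtx_cube N (s : simp N) t : cube (vtx s t).
Proof. move=> i; rewrite ffunE; have := ltn_ord (s.1 i); case: (_ < t) => /=; by rewrite ?addn1 ?addn0 // => /ltnW. Qed.

Section Step.
Variable n : nat.
Local Notation N := n.+1.
Variable lab : {ffun 'I_N -> nat} -> nat.

Definition predp : {perm 'I_N} := perm (@ord_pred_inj N).
Definition succp : {perm 'I_N} := perm (@ordS_inj N).
Definition up (x : {ffun 'I_N -> 'I_K.+1}) c : {ffun 'I_N -> 'I_K.+1} :=
  [ffun i => inord (x i + (i == c))].
Definition down (x : {ffun 'I_N -> 'I_K.+1}) c : {ffun 'I_N -> 'I_K.+1} :=
  [ffun i => inord (x i - (i == c))].

Definition fmap (sj : simp N * 'I_N.+1) : simp N * 'I_N.+1 :=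
  let: (s, j) := sj in let: (x, r) := s in
  if (j : nat) == 0 then
    let c := (r^-1 : {perm 'I_N}) ord0 in
    if x c < K then ((up x c, r * predp), ord_max) else sj
  else if (j : nat) == N then
    let c := (r^-1 : {perm 'I_N}) ord_max in
    if 0 < x c then ((down x c, r * succp), ord0) else sj
  else ((x, r * tperm (inord j.-1) (inord j)), j).

Definition door (sj : simp N * 'I_N.+1) :=
  [forall i : 'I_N, [exists t : 'I_N.+1, (t != sj.2) && (lab (vtx sj.1 t) == i)]].

Lemma vtx_up (x : {ffun 'I_N -> 'I_K.+1}) (r : {perm 'I_N}) (t : nat) : x (r^-1 ord0) < K -> t < N ->
  vtx (up x (r^-1 ord0), r * predp) t = vtx (x, r) t.+1.
Proof.
move=> hx ht; apply/ffunP => i; rewrite !ffunE /= permM /predp (permE (@ord_pred_inj N)) val_ord_pred.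
rewrite inordK; last first.
  case: eqP => [->|_]; first by rewrite addn1.
  by rewrite addn0 ltnS -ltnS.
case: (eqVneq i (r^-1 ord0)) => [->|hi].
  by rewrite permKV /= addn1 ltnNge -ltnS ht addn0 -addn1.
have ri : (r i : nat) != 0.
  apply: contra hi => /eqP h; apply/eqP; rewrite -(permK r i).
  by congr (r^-1 _); apply: val_inj.
have ri0 : 0 < r i by rewrite lt0n.
by rewrite (negbTE ri) addn0 -[in RHS](prednK ri0) ltnS.
Qed.

Lemma vtx_down (x : {ffun 'I_N -> 'I_K.+1}) (r : {perm 'I_N}) (t : nat) :
  0 < x (r^-1 ord_max) -> t < N ->
  vtx (down x (r^-1 ord_max), r * succp) t.+1 = vtx (x, r) t.
Proof.
move=> hx ht; apply/ffunP => i; rewrite !ffunE /= permM /succp (permE (@ordS_inj N)) val_ordS.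
rewrite inordK; last first.
  by apply: leq_ltn_trans (leq_subr _ _) (ltn_ord _).
case: (eqVneq i (r^-1 ord_max)) => [->|hi].
  by rewrite permKV /= eqxx /= ltnNge -ltnS ht addn0 subnK.
have ri : (r i : nat) != n.
  apply: contra hi => /eqP h; apply/eqP; rewrite -(permK r i).
  by congr (r^-1 _); apply: val_inj.
by rewrite eqSS (negbTE ri) subn0 ltnS.
Qed.

Lemma tperm_lt (a b : 'I_N) (p : 'I_N) (t : nat) :
  (a : nat) = b.-1 -> 0 < b -> t != b ->
  (tperm a b p < t) = (p < t).
Proof.
move=> hab hb htb.
have key : (b.-1 < t) = (b < t).
  move: htb; case: (nat_of_ord b) hb => // b' _ /= h.
  by rewrite -[b' < t]/(b'.+1 <= t) leq_eqVlt eq_sym (negbTE h).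
rewrite permE /=.
case: (eqVneq p a) => [->|hpa]; first by rewrite hab key.
case: (eqVneq p b) => [->|hpb] //.
by rewrite hab key.
Qed.

Lemma vtx_mid (x : {ffun 'I_N -> 'I_K.+1}) (r : {perm 'I_N}) (j t : nat) :
  0 < j -> j < N -> t != j ->
  vtx (x, r * tperm (inord j.-1) (inord j)) t = vtx (x, r) t.
Proof.
move=> hj0 hjN htj; apply/ffunP => i; rewrite !ffunE /= permM.
rewrite tperm_lt // ?inordK //; last by apply: leq_ltn_trans (leq_pred _) hjN.
Qed.

Lemma door_transfer (s s' : simp N) (j j' : 'I_N.+1) :
  (forall t : 'I_N.+1, t != j -> exists t' : 'I_N.+1, t' != j' /\ vtx s' t' = vtx s t) ->
  door (s, j) -> door (s', j').
Proof.
move=> h /forallP d; apply/forallP => i; have /existsP [t /andP [tj /eqP lt]] := d i.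
have [t' [t'j e]] := h t tj; apply/existsP; exists t'; by rewrite t'j e lt /=.
Qed.

Lemma fmap_door sj : door sj -> door (fmap sj).
Proof.
case: sj => [[x r] j] /=.
case: ifP => [/eqP j0|jn0].
  case: ifP => // hx; apply: door_transfer => t tj.
  have t0 : 0 < t by rewrite lt0n; apply: contra tj => /eqP h; apply/eqP/val_inj; rewrite /= h j0.
  have tN : t.-1 < N by rewrite -ltnS prednK // ltn_ord.
  exists (inord t.-1); split.
    by apply/eqP => /(congr1 val) /=; rewrite inordK ?(leqW tN) // => h; rewrite h ltnn in tN.
  by rewrite inordK ?(leqW tN) // vtx_up // prednK.
case: ifP => [/eqP jN|jnN].
  case: ifP => // hx; apply: door_transfer => t tj.
  have tN : t < N.
    rewrite ltn_neqAle -ltnS ltn_ord andbT; apply: contra tj => /eqP h.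
    by apply/eqP/val_inj; rewrite /= h jN.
  exists (inord t.+1); split.
    by apply/eqP => /(congr1 val) /=; rewrite inordK.
  by rewrite inordK // vtx_down.
apply: door_transfer => t tj; exists t; split => //.
apply: vtx_mid; first by rewrite lt0n jn0.
  by rewrite ltn_neqAle jnN -ltnS ltn_ord.
exact: tj.
Qed.

Lemma predp_succp : predp * succp = 1.
Proof.
apply/permP => i; rewrite permM /predp /succp (permE (@ord_pred_inj N)) (permE (@ordS_inj N)).
by rewrite ord_predK perm1.
Qed.

Lemma succp_predp : succp * predp = 1.
Proof.
apply/permP => i; rewrite permM /predp /succp (permE (@ord_pred_inj N)) (permE (@ordS_inj N)).
by rewrite ordSK perm1.
Qed.

Lemma fmap_invol sj : fmap (fmap sj) = sj.
Proof.
case: sj => [[x r] j].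
rewrite {2}/fmap.
case: ifP => [/eqP j0|jn0].
  case: ifP => hx; last by rewrite /fmap j0 eqxx hx.
  set c := r^-1 ord0.
  have e : (r * predp)^-1 ord_max = c.
    apply: (@perm_inj _ (r * predp)); rewrite permKV permM permKV.
    by apply/val_inj; rewrite /predp /= (permE (@ord_pred_inj N)) val_ord_pred.
  rewrite /fmap /= e ffunE inordK eqxx ?addn1 // /=.
  rewrite eqxx addn1 /=. congr pair; last by apply/val_inj. congr pair.
    apply/ffunP => i; apply/val_inj; rewrite /= !ffunE.
    have hb : x i + (i == c) < K.+1.
      case: (eqVneq i c) => [->|_]; first by rewrite addn1.
      by rewrite addn0 ltn_ord.
    by rewrite (inordK hb) addnK inordK // ltn_ord.
  by rewrite -mulgA predp_succp mulg1.
case: ifP => [/eqP jN|jnN].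
  case: ifP => hx; last by rewrite /fmap jN /= ?eqxx hx.
  set c := r^-1 ord_max.
  have e : (r * succp)^-1 ord0 = c.
    apply: (@perm_inj _ (r * succp)); rewrite permKV permM permKV.
    by apply/val_inj; rewrite /succp /= (permE (@ordS_inj N)) val_ordS /= eqxx.
  rewrite /fmap /= e ffunE eqxx inordK ?subn1 /=; last first.
    by apply: leq_ltn_trans (leq_pred _) (ltn_ord _).
  rewrite -ltnS prednK // ltn_ord.
  congr pair; last by apply/val_inj. congr pair.
    apply/ffunP => i; apply/val_inj; rewrite /= !ffunE.
    have hb : x i - (i == c) < K.+1 by apply: leq_ltn_trans (leq_subr _ _) (ltn_ord _).
    rewrite (inordK hb) inordK.
      case: (eqVneq i c) => [->|_]; last by rewrite subn0 addn0.
      by rewrite subn1 addn1 prednK.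
    case: (eqVneq i c) => [->|_]; last by rewrite subn0 addn0 ltn_ord.
    by rewrite subn1 addn1 prednK // ltn_ord.
  by rewrite -mulgA succp_predp mulg1.
rewrite /fmap jn0 jnN /=; congr pair; congr pair.
by apply/permP => i; rewrite !permM tpermK.
Qed.

Hypothesis Hlab : good lab.

Lemma fixed_door sj : door sj -> fmap sj = sj ->
  sj.2 = ord_max /\ sj.1.2 ord_max = ord_max /\ (sj.1.1 ord_max : nat) = 0.
Proof.
case: Hlab => H1 H2 H3.
case: sj => [[x r] j] /= /forallP d.
rewrite /fmap; case: ifP => [/eqP j0|jn0].
  case: ifP => hx.
    by move=> /(congr1 snd) /(congr1 val) /=; rewrite j0.
  move=> _; have /existsP [t /andP [tj /eqP lt]] := d ord0.
  set c := r^-1 ord0 in hx.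
  have t0 : 0 < t by rewrite lt0n; apply: contra tj => /eqP h; apply/eqP/val_inj; rewrite /= h j0.
  have : vtx (x, r) t c = K.+1.
    rewrite ffunE /= permKV /= t0 addn1; congr S; apply/eqP.
    by have := ltn_ord (x c); rewrite ltnS => h; rewrite eqn_leq h leqNgt hx.
  by move/(H3 _ _ (vtx_cube _ _)); rewrite lt.
case: ifP => [/eqP jN|jnN].
  case: ifP => hx.
    by move=> /(congr1 snd) /(congr1 val) /=; rewrite jN.
  move=> _.
  set c := r^-1 ord_max in hx.
  have rc : r c = ord_max by rewrite permKV.
  have xc : (x c : nat) = 0 by apply/eqP; rewrite -leqn0 leqNgt hx.
  have cm : c = ord_max.
    apply/eqP; apply/negPn/negP => cn.
    have cl : c.+1 < N by rewrite ltnS ltn_neqAle -ltnS ltn_ord andbT.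
    have /existsP [t /andP [tj /eqP lt]] := d (Ordinal cl).
    have tn : t <= n.
      rewrite -ltnS ltn_neqAle -ltnS ltn_ord andbT; apply: contra tj => /eqP h.
      by apply/eqP/val_inj; rewrite /= h jN.
    have : vtx (x, r) t c = 0 by rewrite ffunE /= rc xc /= ltnNge tn.
    by move/(H2 _ _ (vtx_cube _ _)); rewrite lt.
  split; first by apply/val_inj; rewrite /= jN.
  by rewrite -cm rc -cm xc.
move=> /(congr1 (fun q : simp N * 'I_N.+1 => ((r^-1 * q.1.2)%g : {perm 'I_N}) (inord j.-1))) /=.
rewrite mulKg mulVg perm1 permE /= eqxx => /(congr1 val).
have jp : 0 < j by rewrite lt0n jn0.
have jl : j < N by rewrite ltn_neqAle jnN -ltnS ltn_ord.
have jl' : j.-1 < N by apply: leq_ltn_trans (leq_pred _) jl.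
rewrite /= !inordK // => h.
by move: jp; rewrite -ltn_predL -h ltnn.
Qed.


Definition ext (p : {ffun 'I_n -> nat}) : {ffun 'I_N -> nat} :=
  [ffun i => if unlift ord_max i is Some i' then p i' else 0].
Definition phi (s' : simp n) : simp N :=
  ([ffun i => if unlift ord_max i is Some i' then s'.1 i' else ord0],
   lift_perm ord_max ord_max s'.2).
Definition lab' (p : {ffun 'I_n -> nat}) := lab (ext p).

Lemma val_lift_max (i : 'I_n) : (lift ord_max i : nat) = i.
Proof. by rewrite /= /bump leqNgt ltn_ord. Qed.

Lemma vtx_phi (s' : simp n) (t : nat) : t <= n -> vtx (phi s') t = ext (vtx s' t).
Proof.
move=> tn; apply/ffunP => i; rewrite !ffunE /=.
case: (unliftP ord_max i) => [i'|] ->.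
  by rewrite ffunE lift_perm_lift val_lift_max.
by rewrite lift_perm_id /= ltnNge tn.
Qed.

Lemma ext_cube p : cube p -> cube (ext p).
Proof. by move=> h i; rewrite ffunE; case: (unlift _ _). Qed.

Lemma good_face : good lab'.
Proof.
case: Hlab => H1 H2 H3; split.
- move=> p cp; have := H1 _ (ext_cube cp); rewrite leq_eqVlt ltnS => /orP [/eqP e|//].
  by exfalso; apply: (H2 (ext p) ord_max (ext_cube cp)) => //; rewrite ffunE unlift_none.
- move=> p i cp pi; have := H2 (ext p) (lift ord_max i) (ext_cube cp).
  by rewrite ffunE liftK val_lift_max /lab' => h; apply: h.
- move=> p i cp pi; have := H3 (ext p) (lift ord_max i) (ext_cube cp).
  by rewrite ffunE liftK /lab' => h; apply: h.
Qed.

Lemma restr_perm_ex (r : {perm 'I_N}) : r ord_max = ord_max ->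
  exists q : {perm 'I_n}, lift_perm ord_max ord_max q = r.
Proof.
move=> rm.
have hS : forall k : 'I_n, {k' | r (lift ord_max k) = lift ord_max k'}.
  move=> k; case: (unliftP ord_max (r (lift ord_max k))) => [k' ->|e]; first by exists k'.
  have : r (lift ord_max k) = r ord_max by rewrite rm.
  by move/perm_inj/eqP; rewrite eq_sym (negbTE (neq_lift _ _)).
pose g k := sval (hS k).
have gE k : r (lift ord_max k) = lift ord_max (g k) by rewrite /g; case: (hS k).
have ginj : injective g.
  by move=> a b e; apply: (@lift_inj _ ord_max); apply: (@perm_inj _ r); rewrite !gE e.
exists (perm ginj); apply/permP => i; case: (unliftP ord_max i) => [i'|] ->.
  by rewrite lift_perm_lift permE gE.
by rewrite lift_perm_id rm.
Qed.

Lemma phi_inj : injective phi.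
Proof.
move=> [y q] [y' q'] /= [ey eq].
congr pair.
  apply/ffunP => i; move/ffunP: ey => /(_ (lift ord_max i)); by rewrite !ffunE liftK.
apply/permP => i; move/permP: eq => /(_ (lift ord_max i)).
by rewrite !lift_perm_lift => /lift_inj.
Qed.

Definition Dset := [set sj | door sj].

Lemma fixed_set :
  [set sj in Dset | fmap sj == sj] = [set (phi s', ord_max) | s' in [set s' | fl lab' s']].
Proof.
apply/setP => [[s j]]; rewrite !inE.
apply/idP/idP.
  case/andP => ds /eqP fs.
  have [/= jm [rm xm]] := fixed_door ds fs.
  case: s ds fs rm xm jm => x r ds fs rm xm jm.
  have [q eq] := restr_perm_ex rm.
  pose y : {ffun 'I_n -> 'I_K.+1} := [ffun i => x (lift ord_max i)].
  have ph : phi (y, q) = (x, r).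
    rewrite /phi /= eq; congr pair; apply/ffunP => i; rewrite !ffunE.
    case: (unliftP ord_max i) => [i'|] ->; first by rewrite ffunE.
    by apply/val_inj; rewrite /= xm.
  apply/imsetP; exists (y, q); last by rewrite ph jm.
  rewrite inE; apply/forallP => i; move/forallP: ds => /(_ i) /existsP [t /andP [tj /eqP lt]].
  have tn : t <= n.
    rewrite -ltnS ltn_neqAle -ltnS ltn_ord andbT; apply: contra tj => /eqP h.
    by apply/eqP/val_inj; rewrite /= h jm.
  apply/existsP; exists (inord t); rewrite inordK // /lab' -vtx_phi // ph lt.
  by [].
case/imsetP => s' hs' [-> ->]; apply/andP; split; last first.
  rewrite /fmap /= eqxx.
  have -> : (lift_perm ord_max ord_max s'.2)^-1 ord_max = ord_max.
    by apply: (@perm_inj _ (lift_perm ord_max ord_max s'.2)); rewrite permKV lift_perm_id.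
  by rewrite ffunE unlift_none ltnn.
rewrite inE in hs'; apply/forallP => i; move/forallP: hs' => /(_ i) /existsP [t /eqP lt].
apply/existsP; exists (widen_ord (leqnSn _) t); apply/andP; split.
  by rewrite -val_eqE /= neq_ltn ltn_ord.
by rewrite /= vtx_phi; [apply/eqP; exact: lt | exact: ltn_ord t].
Qed.

Lemma card_fixed :
  #|[set sj in Dset | fmap sj == sj]| = #|[set s' | fl lab' s']|.
Proof.
rewrite fixed_set card_in_imset // => a b _ _ /(congr1 fst) /=.
exact: phi_inj.
Qed.


Definition gmap (sj : simp N * 'I_N.+1) : simp N * 'I_N.+1 :=
  let: (s, j) := sj in
  if [pick t | (t != j) && (lab (vtx s t) == lab (vtx s j))] is Some t then (s, t) else (s, j).

Lemma door_inj s j : door (s, j) -> forall t1 t2 : 'I_N.+1, t1 != j -> t2 != j ->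
  lab (vtx s t1) = lab (vtx s t2) -> t1 = t2.
Proof.
move=> /forallP d t1 t2 h1 h2 e.
pose f (t : 'I_N.+1) : 'I_N.+1 := inord (lab (vtx s t)).
have : {in [set~ j] &, injective f}.
  apply: (@surj_inj_in _ _ _ _ [set~ (@ord_max N)]); first by rewrite !cardsC1.
  apply/subsetP => i; rewrite !inE => hi.
  have il : i < N by rewrite ltn_neqAle -ltnS ltn_ord andbT; rewrite -val_eqE in hi.
  have /existsP [t /andP [tj /eqP lt]] := d (Ordinal il).
  apply/imsetP; exists t; first by rewrite !inE.
  by apply/val_inj; rewrite /f /= lt inordK // ltnW.
by apply; rewrite ?inE // /f e.
Qed.

Lemma gmap_door sj : door sj -> door (gmap sj).
Proof.
case: sj => s j /= dj; case: pickP => // t /andP [tj /eqP lt].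
apply/forallP => i; move/forallP: dj => /(_ i) /existsP [u /andP [uj /eqP lu]].
apply/existsP; case: (eqVneq u t) => [ut|ut].
  by exists j; rewrite /= eq_sym tj /= -lt -lu ut.
by exists u; rewrite ut lu eqxx.
Qed.

Lemma gmapP (s : simp N) (j : 'I_N.+1) :
  (exists t : 'I_N.+1, [/\ t != j, lab (vtx s t) = lab (vtx s j) & gmap (s, j) = (s, t)]) \/
  ((forall t : 'I_N.+1, t != j -> lab (vtx s t) <> lab (vtx s j)) /\ gmap (s, j) = (s, j)).
Proof.
rewrite /gmap; case: pickP => [t /andP [tj /eqP lt]|hn]; first by left; exists t.
right; split => // t tj lt; have := hn t; by rewrite tj lt eqxx.
Qed.

Lemma gmap_invol sj : door sj -> gmap (gmap sj) = sj.
Proof.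
case: sj => s j dj.
case: (gmapP s j) => [[t [tj lt ->]] | [_ e]]; last by rewrite !e.
have dt : door (s, t) by have := gmap_door dj; rewrite /gmap; case: pickP => [u /andP [uj /eqP lu]|/(_ t)];
  [rewrite -(door_inj dj uj tj (etrans lu (esym lt))) | rewrite tj lt eqxx].
case: (gmapP s t) => [[u [ut lu ->]] | [hn _]].
  congr pair; apply: (door_inj dt ut _ (etrans lu lt)); by rewrite eq_sym.
exfalso; apply: (hn j); [by rewrite eq_sym | by rewrite lt].
Qed.


Lemma fixed_g_lab s j : door (s, j) -> gmap (s, j) = (s, j) -> lab (vtx s j) = N.
Proof.
case: Hlab => H1 _ _ dj.
case: (gmapP s j) => [[t [tj lt ->]] | [hn _]].
  by move=> [] /eqP; rewrite (negbTE tj).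
move=> _; have hb := H1 _ (vtx_cube s j).
apply/eqP; rewrite eqn_leq hb /= ltnNge; apply/negP => hl.
move/forallP: dj => /(_ (@Ordinal N _ hl)) /existsP [t /andP [tj /eqP lt]].
by apply: (hn t tj).
Qed.

Lemma card_fixed_g :
  #|[set sj in Dset | gmap sj == sj]| = #|[set s | fl lab s]|.
Proof.
case: Hlab => H1 _ _.
have -> : [set s | fl lab s] = fst @: [set sj in Dset | gmap sj == sj].
  apply/setP => s; rewrite inE; apply/idP/imsetP.
    move=> fs.
    have /existsP [j /eqP lj] := (forallP fs) ord_max.
    have dj : door (s, j).
      apply/forallP => i; have /existsP [t /eqP lt] := (forallP fs) (widen_ord (leqnSn _) i).
      apply/existsP; exists t; rewrite lt eqxx andbT.
      apply/negP => /eqP tj; move: lt; rewrite tj lj /= => e.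
      by move: (ltn_ord i); rewrite -e ltnn.
    exists (s, j) => //; rewrite !inE dj andTb.
    case: (gmapP s j) => [[t [tj lt _]] | [_ ->]] //.
    pose f (t : 'I_N.+1) : 'I_N.+1 := inord (lab (vtx s t)).
    have : {in [set: 'I_N.+1] &, injective f}.
      apply: (@surj_inj_in _ _ _ _ [set: 'I_N.+1]) => //.
      apply/subsetP => i _; have /existsP [u /eqP lu] := (forallP fs) i.
      by apply/imsetP; exists u; rewrite ?inE //; apply/val_inj; rewrite /f /= lu inordK.
    move=> fi; have tj' : t = j by apply: fi; rewrite ?inE // /f lt.
    by rewrite tj' eqxx in tj.
  case=> [[s' j]]; rewrite !inE /= => /andP [dj /eqP gj] ->.
  have lj := fixed_g_lab dj gj.
  apply/forallP => i; apply/existsP.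
  case: (eqVneq (i : nat) N) => [iN|iN].
    by exists j; rewrite lj iN.
  have il : i < N by rewrite ltn_neqAle iN -ltnS ltn_ord.
  move/forallP: dj => /(_ (Ordinal il)) /existsP [t /andP [_ lt]].
  by exists t.
rewrite card_in_imset //.
move=> [s j] [s' j']; rewrite !inE /= => /andP [dj /eqP gj] /andP [dj' /eqP gj'] e.
subst s'; congr pair.
have lj := fixed_g_lab dj gj; have lj' := fixed_g_lab dj' gj'.
apply/eqP; apply/negP => /negP jj.
case: (gmapP s j) => [[t [tj lt e]] | [hn _]].
  by move: (etrans (esym e) gj) => [] /eqP; rewrite (negbTE tj).
by apply: (hn j'); [rewrite eq_sym | rewrite lj lj'].
Qed.

End Step.

Lemma kuhn_step n (lab : {ffun 'I_n.+1 -> nat} -> nat) : good lab ->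
  odd #|[set s | fl lab s]| = odd #|[set s' | fl (lab' lab) s']|.
Proof.
move=> H.
rewrite -card_fixed_g // -parity_inv; last first.
- by move=> a; rewrite inE => da; apply: gmap_invol.
- by move=> a; rewrite !inE => da; apply: gmap_door.
rewrite -card_fixed // -parity_inv //.
- by move=> a; rewrite !inE => da; apply: fmap_door.
- by move=> a _; apply: fmap_invol.
Qed.

Theorem kuhn N (lab : {ffun 'I_N -> nat} -> nat) : good lab -> odd #|[set s | fl lab s]|.
Proof.
elim: N lab => [|n IH] lab H.
  have -> : [set s | fl lab s] = setT.
    apply/setP => s; rewrite !inE; apply/forallP => i; apply/existsP; exists ord0.
    case: H => H1 _ _; have := H1 (vtx s 0) (vtx_cube _ _); rewrite leqn0 => /eqP ->.
    by case: i => [[|m]].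
  by rewrite cardsT card_prod card_ffun card_Sn !card_ord expn0.
rewrite kuhn_step //; apply: IH; exact: good_face.
Qed.
End Kuhn.

Section Hex.
Variables (n K : nat).
Variable col : {ffun 'I_n -> nat} -> nat.
Definition inO (p : {ffun 'I_n -> nat}) := [forall i, p i <= K].
Hypothesis Hcol : forall p, inO p -> col p < n.

Definition adjF (p q : {ffun 'I_n -> nat}) := [forall i, (p i <= q i + 1) && (q i <= p i + 1)].

Definition ecol (p : {ffun 'I_n -> nat}) : nat :=
  if [pick i : 'I_n | K < p i] is Some i then (i : nat) else col p.

Inductive fchain (c : nat) : {ffun 'I_n -> nat} -> {ffun 'I_n -> nat} -> Prop :=
 | fc0 p : cube K p -> ecol p = c -> fchain c p p
 | fcS p q r : cube K p -> ecol p = c -> adjF p q -> fchain c q r -> fchain c p r.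

Lemma fchain_snoc c p q r : fchain c p q -> adjF q r -> cube K r -> ecol r = c -> fchain c p r.
Proof.
elim => [a ca ea | a b d ca ea ab _ IH] qr cr er.
  by apply: fcS ca ea qr (fc0 cr er).
by apply: fcS ca ea ab (IH qr cr er).
Qed.

Definition R (j : 'I_n) (p : {ffun 'I_n -> nat}) := exists q : {ffun 'I_n -> nat}, q j = K.+1 /\ fchain j q p.
Definition Rb (j : 'I_n) (p : {ffun 'I_n -> nat}) : bool := if excluded_middle_informative (R j p) then true else false.
Lemma RbP (j : 'I_n) (p : {ffun 'I_n -> nat}) : Rb j p <-> R j p.
Proof. by rewrite /Rb; case: excluded_middle_informative. Qed.

Definition hlab (p : {ffun 'I_n -> nat}) : nat :=
  if [pick j : 'I_n | Rb j p] is Some j then j.+1 else 0.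

Lemma vtx_adj (s : simp K n) (t1 t2 : nat) : adjF (vtx s t1) (vtx s t2).
Proof.
apply/forallP => i; rewrite !ffunE.
by rewrite -!addnA !leq_add2l; case: (_ < t1); case: (_ < t2).
Qed.


Inductive ochain (c : nat) : {ffun 'I_n -> nat} -> {ffun 'I_n -> nat} -> Prop :=
 | oc0 p : inO p -> col p = c -> ochain c p p
 | ocS p q r : inO p -> col p = c -> adjF p q -> ochain c q r -> ochain c p r.

Lemma ecol_in p : inO p -> ecol p = col p.
Proof.
move=> /forallP h; rewrite /ecol; case: pickP => // i; by rewrite ltnNge h.
Qed.

Lemma ecol_out p : ~~ inO p -> exists i : 'I_n, K < p i /\ ecol p = i.
Proof.
rewrite negb_forall => /existsP [i hi]; rewrite /ecol; case: pickP => [i' hi'|/(_ i)].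
  by exists i'.
by rewrite ltnNge hi.
Qed.

Lemma fchain_end c q p : fchain c q p -> cube K p /\ ecol p = c.
Proof. by elim. Qed.

Lemma extract (j : 'I_n) q p : fchain j q p -> inO p ->
  (exists z, [/\ inO z, z j = K & ochain j z p]) \/ (inO q /\ ochain j q p).
Proof.
elim => [a ca ea | a b d ca ea ab _ IH] pO.
  by right; split => //; apply: oc0 => //; rewrite -ecol_in.
case: (IH pO) => [ex|[bO ob]]; first by left.
case: (boolP (inO a)) => aO.
  by right; split => //; apply: ocS ab ob => //; rewrite -ecol_in.
left; exists b; split => //.
  have [i [hi ei]] := ecol_out aO.
  have ij : i = j by apply/val_inj; rewrite /= -ei ea.
  subst i.
  move/forallP: ab => /(_ j) /andP [h1 _].
  apply/eqP; rewrite eqn_leq (forallP bO j) /=.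
  have := ca j; rewrite leq_eqVlt ltnS leqNgt hi orbF => /eqP e.
  by rewrite e addn1 ltnS in h1.
Qed.

Hypothesis n0 : 0 < n.

Lemma hex_E : exists (j : 'I_n) (q p : {ffun 'I_n -> nat}), [/\ q j = K.+1, fchain j q p & p j = 0].
Proof.
apply: Classical_Prop.NNPP => H.
have G : good K hlab.
  split.
  - move=> p _; rewrite /hlab; case: pickP => // j _; exact: ltn_ord.
  - move=> p i cp pi; rewrite /hlab; case: pickP => // j /RbP [q [qj fq]] [ji].
    have ij : j = i by apply/val_inj.
    by subst j; apply: H; exists i, q, p.
  - move=> p i cp pi; rewrite /hlab; case: pickP => // hn _.
    have pO : ~~ inO p by rewrite negb_forall; apply/existsP; exists i; rewrite pi ltnn.
    have [i0 [hi0 ei0]] := ecol_out pO.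
    have : Rb i0 p.
      apply/RbP; exists p; split; last by apply: fc0.
      by apply/eqP; rewrite eqn_leq cp; exact: hi0.
    by rewrite hn.
have := kuhn G; case: (set_0Vmem [set s : simp K n | fl hlab s]) => [-> | [s]]; first by rewrite cards0.
rewrite inE => /forallP fs _.
have /existsP [t0 /eqP l0] := fs ord0.
set w := vtx s t0 in l0.
have cn : ecol w < n.
  case: (boolP (inO w)) => wO; first by rewrite ecol_in // Hcol.
  by have [i [_ ->]] := ecol_out wO; exact: ltn_ord.
have /existsP [t1 /eqP l1] := fs (@Ordinal n.+1 (ecol w).+1 cn).
move: l1; rewrite /hlab; case: pickP => // j /RbP [q [qj fq]] [] ej.
have Rbw : Rb j w.
  apply/RbP; exists q; split => //.
  by apply: (fchain_snoc fq (vtx_adj s t1 t0) (vtx_cube s t0)); rewrite ej.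
by move: l0; rewrite /hlab; case: pickP => // /(_ j); rewrite Rbw.
Qed.


Lemma hex_O : exists (j : 'I_n) (z p : {ffun 'I_n -> nat}), [/\ inO z, z j = K, ochain j z p & p j = 0].
Proof.
have [j [q [p [qj fq pj]]]] := hex_E.
have [cp ep] := fchain_end fq.
have pO : inO p.
  apply/negPn/negP => pO; have [i [hi ei]] := ecol_out pO.
  have ij : i = j by apply/val_inj; rewrite /= -ei ep.
  by subst i; rewrite pj in hi.
case: (extract fq pO) => [[z [zO zj oz]] | [qO _]]; first by exists j, z, p.
by move: (forallP qO j); rewrite qj ltnn.
Qed.

End Hex.

Inductive schain (n K : nat) (col : (nat -> nat) -> nat) (c : nat) : (nat -> nat) -> (nat -> nat) -> Prop :=
 | sc0 x : in_cube n K x -> col x = c -> schain n K col c x x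
 | scS x y z : in_cube n K x -> col x = c ->
     (forall i, (i < n)%coq_nat -> (x i <= y i + 1)%coq_nat /\ (y i <= x i + 1)%coq_nat) ->
     schain n K col c y z -> schain n K col c x z.

Lemma hex_neutral (n K : nat) (col : (nat -> nat) -> nat) :
  (0 < n)%coq_nat -> (forall x, in_cube n K x -> (col x < n)%coq_nat) ->
  exists (c j : nat) (z p : nat -> nat),
    (j < n)%coq_nat /\ z j = K /\ p j = 0 /\ schain n K col c z p.
Proof.
case: n col => [|n] col hn hcol; first by inversion hn.
pose toF (p : {ffun 'I_n.+1 -> nat}) : nat -> nat := fun i => p (inord i).
have toFc : forall p, inO K p -> in_cube n.+1 K (toF p).
  move=> p /forallP pO i /ltP hi; apply/leP; rewrite /toF; exact: pO.
have Hc : forall p, inO K p -> col (toF p) < n.+1 by move=> p /toFc /hcol /ltP.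
have [j [z [p [zO zj oz pj]]]] := hex_O Hc.
exists j, j, (toF z), (toF p); split; first by apply/ltP.
split; first by rewrite /toF inord_val.
split; first by rewrite /toF inord_val.
elim: oz {zj pj zO} => [a aO ca | a b d aO ca ab _ IH].
  by apply: sc0 => //; apply: toFc.
apply: scS (toFc _ aO) ca _ IH => i /ltP hi.
move/forallP: ab => /(_ (inord i)) /andP [h1 h2].
by split; apply/leP; rewrite /toF.
Qed.


End MC.

Open Scope R_scope.

Lemma last_indep {A} (l : list A) a d d' : List.last (a :: l) d = List.last (a :: l) d'.
Proof.
revert a; induction l as [|b l IH]; intros a; [reflexivity|].
change (List.last (b :: l) d = List.last (b :: l) d'). apply IH.
Qed.

Lemma last_in {A} (l : list A) a d : In (List.last (a :: l) d) (a :: l).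
Proof.
revert a; induction l as [|b l IH]; intros a; [simpl; auto|].
change (In (List.last (b :: l) d) (a :: b :: l)). right. apply IH.
Qed.

Lemma chain_cons {X} (d : X -> X -> R) s (U : X -> Prop) x y z :
  U x -> d x y < s -> s_chain_in d s U y z -> s_chain_in d s U x z.
Proof.
intros Ux dxy [l [HU [Hl Hn]]].
exists (y :: l); cbn zeta in *; repeat split.
- intros w [<-|Hw]; auto.
- change (List.last (x :: y :: l) x) with (List.last (y :: l) x).
  rewrite (last_indep l y x y); exact Hl.
- intros [|i] Hi.
  + simpl. exact dxy.
  + simpl in Hi.
    change (d (nth i (y :: l) x) (nth (S i) (y :: l) x) < s).
    rewrite (nth_indep (y :: l) x y) by (simpl; lia).
    rewrite (nth_indep (y :: l) x y (n := S i)) by (simpl; lia).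
    apply Hn. simpl; lia.
Qed.

Lemma chain_refl {X} (d : X -> X -> R) s (U : X -> Prop) x : U x -> s_chain_in d s U x x.
Proof.
intros Ux; exists nil; cbn zeta; repeat split.
- intros w [<-|[]]; auto.
- intros i Hi; simpl in Hi; lia.
Qed.

Lemma l1_nonneg n x y : 0 <= l1_dist n x y.
Proof. induction n; simpl; [lra|]. pose proof (Rabs_pos (INR (x n) - INR (y n))); lra. Qed.

Lemma l1_ge n x y j : (j < n)%nat -> Rabs (INR (x j) - INR (y j)) <= l1_dist n x y.
Proof.
induction n; intros Hj; [lia|]. simpl.
destruct (Nat.eq_dec j n) as [->|Hne].
- pose proof (l1_nonneg n x y); lra.
- pose proof (IHn ltac:(lia)). pose proof (Rabs_pos (INR (x n) - INR (y n))); lra.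
Qed.

Lemma l1_adj n x y : (forall i, (i < n)%nat -> (x i <= y i + 1)%nat /\ (y i <= x i + 1)%nat) ->
  l1_dist n x y <= INR n.
Proof.
induction n; intros H; [simpl; lra|].
change (l1_dist (S n) x y) with (l1_dist n x y + Rabs (INR (x n) - INR (y n))).
assert (IH := IHn (fun i Hi => H i ltac:(lia))).
destruct (H n ltac:(lia)) as [h1 h2].
apply le_INR in h1; apply le_INR in h2. rewrite plus_INR in h1, h2. simpl in h1, h2.
assert (Rabs (INR (x n) - INR (y n)) <= 1) by (apply Rabs_le; lra).
rewrite S_INR. lra.
Qed.

Theorem corollary2p8 (X : Type) (d : X -> X -> R) (n : nat)
    (k : nat -> nat) (f : nat -> (nat -> nat) -> X) :
  is_metric d ->
  (forall m, dilated_cube d n (k m) (f m)) ->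
  (forall B : nat, exists M : nat, forall m, (M <= m)%nat -> (B <= k m)%nat) ->
  asdimAN_ge d n.
Proof.
intros Hmet Hcube Hk m Hm [C' [k0 [HC' [_ Hcov]]]].
destruct (INR_unbounded (C' * (INR n + 1) + Rabs k0)) as [B HB].
destruct (Hk B) as [M HM].
specialize (HM M (le_n M)).
destruct (Hcube M) as [C [HC1 Hiso]].
set (K := k M) in *.
set (s := C * (INR n + 1)).
assert (Hs : 0 < s) by (unfold s; pose proof (pos_INR n); nra).
destruct (Hcov s Hs) as [U [HUc HUb]].
set (colX := fun y : X => proj1_sig (constructive_indefinite_description _ (HUc y))).
assert (HcolX : forall y, (colX y <= m)%nat /\ U (colX y) y).
{ intros y; unfold colX; destruct (constructive_indefinite_description _ (HUc y)) as [i Hi]; exact Hi. }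
set (col := fun x => colX (f M x)).
destruct (@MC.hex_neutral n K col) as [c [j [z [p [Hj [Hzj [Hpj Hch]]]]]]].
{ lia. }
{ intros x _; unfold col; destruct (HcolX (f M x)); lia. }
assert (Hc : (c <= m)%nat /\ in_cube n K z /\ in_cube n K p /\ s_chain_in d s (U c) (f M z) (f M p)).
{ clear Hzj Hpj. induction Hch as [x Hx Hcx | x y w Hx Hcx Hadj Hyw IH].
  - subst c. destruct (HcolX (f M x)) as [h1 h2]. repeat split; auto.
    apply chain_refl; exact h2.
  - destruct IH as [h1 [h2 [h3 h4]]]. repeat split; auto.
    apply (chain_cons d s (U c) (f M x) (f M y)); auto.
    + subst c; apply (HcolX (f M x)).
    + assert (Hyin : in_cube n K y) by (inversion Hyw; auto).
      rewrite (Hiso x y Hx Hyin). pose proof (l1_adj n x y Hadj). unfold s.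
      pose proof (l1_nonneg n x y). nra. }
destruct Hc as [Hcm [Hz [Hp Hzp]]].
assert (Hb := HUb c Hcm (f M z) (f M p)).
assert (Hzc : U c (f M z)).
{ destruct Hzp as [l [HU _]]. apply HU. simpl; auto. }
assert (Hpc : U c (f M p)).
{ destruct Hzp as [l [HU [Hl _]]]. rewrite <- Hl. apply HU. apply last_in. }
specialize (Hb Hzc Hpc Hzp).
rewrite (Hiso z p Hz Hp) in Hb.
assert (Hl1 := l1_ge n z p j Hj). rewrite Hzj, Hpj in Hl1. simpl in Hl1.
rewrite Rminus_0_r, Rabs_right in Hl1 by apply Rle_ge, pos_INR.
apply le_INR in HM.
unfold s in Hb.
assert (Hk0 := Rle_abs k0). assert (Hk1 := Rabs_pos k0).
assert (HCK : C * INR K <= C * (C' * (INR n + 1) + Rabs k0)) by nra.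
apply Rmult_le_reg_l in HCK; [|lra]. fold K in HM. lra.
Qed.
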